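(* Let $n\ge 1$ and $G\in\mathcal{G}_{2n}$ with $F(G)=n-1$. Then the forcing spectrum of $G$ is continuous, i.e. $\{f(G,M): M \text{ a perfect matching of } G\}=\{f(G), f(G)+1,\dots, n-1\}$.
   Context: All graphs are finite and simple. $\mathcal{G}_{2n}$ denotes the set of all graphs with $2n$ vertices that have a perfect matching. For a perfect matching $M$ of $G$, a forcing set of $M$ is a subset $S\subseteq M$ contained in no other perfect matching of $G$; $f(G,M)$ is the minimum size of a forcing set of $M$. $f(G)$ and $F(G)$ are the minimum and maximum of $f(G,M)$ over all perfect matchings $M$ of $G$. The forcing spectrum of $G$ is the set of forcing numbers of all perfect matchings of $G$; it is continuous if it is an integer interval. *)

(* Defs.v *)
(* A simple graph is a symmetric irreflexive relation e on a
   finite vertex type T; edges are 2-element vertex sets {x,y} with e x y. *)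
From mathcomp Require Import all_boot.
Set Implicit Arguments. Unset Strict Implicit. Unset Printing Implicit Defensive.

Section Matchings.
Variables (T : finType) (e : rel T).

Definition is_edge (D : {set T}) : bool :=
  [exists x, exists y, (D == [set x; y]) && e x y].

Definition perfect_matching (M : {set {set T}}) : bool :=
  [forall D in M, is_edge D] &&
  [forall v : T, #|[set D in M | v \in D]| == 1].

Definition forcing_set (M S : {set {set T}}) : bool :=
  (S \subset M) &&
  [forall M' : {set {set T}}, (perfect_matching M' && (S \subset M')) ==> (M' == M)].

(* f(G,M): minimum size of a forcing set of M (M itself is one). *)
Definition forcing_number (M : {set {set T}}) : nat :=
  \big[minn/#|M|]_(S : {set {set T}} | forcing_set M S) #|S|.

(* f(G): minimum forcing number over all perfect matchings
   (default #|T| only matters when G has no perfect matching). *)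
Definition min_forcing_number : nat :=
  \big[minn/#|T|]_(M : {set {set T}} | perfect_matching M) forcing_number M.

Definition max_forcing_number : nat :=
  \max_(M : {set {set T}} | perfect_matching M) forcing_number M.

Definition in_forcing_spectrum (k : nat) : Prop :=
  exists M, perfect_matching M /\ forcing_number M = k.

End Matchings.

(* Main.v *)
Require Import Defs.
From mathcomp Require Import all_boot.
Set Implicit Arguments. Unset Strict Implicit. Unset Printing Implicit Defensive.

Lemma bigmin_leq (I : finType) (P : pred I) (F : I -> nat) x j :
  P j -> \big[minn/x]_(i | P i) F i <= F j.
Proof.
move=> Pj; rewrite unlock /reducebig.
have : j \in index_enum I by exact: mem_index_enum.
elim: (index_enum I) => [//|a r IH] /=; rewrite inE => /orP [/eqP <-|jr].
  by rewrite Pj geq_minl.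
case: (P a) => /=; last exact: IH.
by rewrite geq_min IH ?orbT.
Qed.

Section S.
Variables (T : finType) (e : rel T).
Hypothesis e_sym : symmetric e.
Hypothesis e_irr : irreflexive e.

Notation pm := (perfect_matching e).

Lemma pm_edge M D : pm M -> D \in M -> is_edge e D.
Proof. by case/andP => /forallP H _ DM; exact: (implyP (H D)). Qed.

Lemma pm_card M v : pm M -> #|[set D in M | v \in D]| = 1.
Proof. by case/andP => _ /forallP H; apply/eqP. Qed.

Lemma is_edgeP D : is_edge e D -> exists u w, D = [set u; w] /\ e u w.
Proof. by case/existsP => u /existsP [w /andP [/eqP -> h]]; exists u, w. Qed.

Lemma set2_edge x y : is_edge e [set x; y] -> e x y.
Proof.
case/is_edgeP => u [w [H h]].
have xu : x \in [set u; w] by rewrite -H set21.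
have yu : y \in [set u; w] by rewrite -H set22.
have ux : u \in [set x; y] by rewrite H set21.
have wx : w \in [set x; y] by rewrite H set22.
case/set2P: xu => Hx; case/set2P: yu => Hy; subst x y => //.
- by case/set2P: wx => Hw; rewrite -Hw e_irr in h.
- by rewrite e_sym.
- by case/set2P: ux => Hw; rewrite Hw e_irr in h.
Qed.

Lemma pm_uniq M D1 D2 v : pm M -> D1 \in M -> D2 \in M -> v \in D1 -> v \in D2 -> D1 = D2.
Proof.
move=> pmM D1M D2M v1 v2; have /eqP := pm_card v pmM.
case/cards1P => D HD.
have : D1 \in [set D] by rewrite -HD inE D1M v1.
have : D2 \in [set D] by rewrite -HD inE D2M v2.
by rewrite !inE => /eqP -> /eqP ->.
Qed.

Lemma pm_cover M v : pm M -> exists y, [set v; y] \in M.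
Proof.
move=> pmM; have /eqP := pm_card v pmM; case/cards1P => D HD.
have : D \in [set D] by rewrite set11.
rewrite -HD inE => /andP [DM vD].
case/is_edgeP: (pm_edge pmM DM) => u [w [HD' _]]; subst D.
case/set2P: vD => ->; first by exists w.
by exists u; rewrite setUC.
Qed.

Definition mate (M : {set {set T}}) (x : T) : T := odflt x [pick y | [set x; y] \in M].

Lemma mate_in M x : pm M -> [set x; mate M x] \in M.
Proof.
move=> pmM; rewrite /mate; case: pickP => [y //|H].
by case: (pm_cover x pmM) => y; rewrite H.
Qed.

Lemma edge_in M x y : pm M -> [set x; y] \in M -> e x y.
Proof. by move=> pmM H; apply: set2_edge; exact: pm_edge H. Qed.

Lemma mate_edge M x : pm M -> e x (mate M x).
Proof. by move=> pmM; apply: edge_in pmM (mate_in _ pmM). Qed.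

Lemma mate_uniq M x y : pm M -> [set x; y] \in M -> mate M x = y.
Proof.
move=> pmM H.
have E := pm_uniq pmM (mate_in x pmM) H (set21 _ _) (set21 _ _).
have : y \in [set x; mate M x] by rewrite E set22.
case/set2P => // yx; subst y.
by have := edge_in pmM H; rewrite e_irr.
Qed.

Lemma mateK M x : pm M -> mate M (mate M x) = x.
Proof. by move=> pmM; apply: mate_uniq => //; rewrite setUC mate_in. Qed.

Lemma mate_neq M x : pm M -> mate M x != x.
Proof. move=> pmM; apply/eqP => H; have := mate_edge x pmM; by rewrite H e_irr. Qed.

Lemma notin2 M x y : pm M -> mate M x != y -> [set x; y] \notin M.
Proof. by move=> pmM H; apply/negP => /(mate_uniq pmM) /eqP; rewrite (negbTE H). Qed.

Lemma pm_sub_eq M N : pm M -> pm N -> M \subset N -> M = N.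
Proof.
move=> pmM pmN sMN; apply/eqP; rewrite eqEsubset sMN /=; apply/subsetP => D DN.
case/is_edgeP: (pm_edge pmN DN) => u [w [HD _]]; subst D.
have h1 := mate_uniq pmN DN.
have h2 := mate_uniq pmN (subsetP sMN _ (mate_in u pmM)).
by rewrite -h1 h2 mate_in.
Qed.


Lemma neq2 (x y u w : T) : x != u -> x != w -> [set x; y] != [set u; w].
Proof.
move=> h1 h2; apply/eqP => H.
have : x \in [set u; w] by rewrite -H set21.
by case/set2P => Hx; [move: h1|move: h2]; rewrite Hx eqxx.
Qed.

Lemma is_edge2 x y : e x y -> is_edge e [set x; y].
Proof. by move=> h; apply/existsP; exists x; apply/existsP; exists y; rewrite eqxx h. Qed.

Definition sw (M : {set {set T}}) (a b c d : T) : {set {set T}} :=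
  (M :\ [set b; c] :\ [set d; a]) :|: [set [set a; b]; [set c; d]].

Lemma in_sw M a b c d D :
  (D \in sw M a b c d) =
  [|| (D != [set d; a]) && (D != [set b; c]) && (D \in M), D == [set a; b] | D == [set c; d]].
Proof. by rewrite /sw !inE; case: (D == [set d; a]); case: (D == [set b; c]); case: (D == [set a; b]). Qed.

Lemma card1_of (X : {set {set T}}) v D0 :
  D0 \in X -> v \in D0 -> (forall D, D \in X -> v \in D -> D = D0) ->
  #|[set D in X | v \in D]| == 1.
Proof.
move=> h1 h2 h3; apply/cards1P; exists D0; apply/setP => D; rewrite !inE.
apply/andP/eqP => [[h4 h5]|->]; [exact: h3|by rewrite h1 h2].
Qed.

Section Sw.
Variables (M : {set {set T}}) (a b c d : T).
Hypotheses (pmM : pm M) (bcM : [set b; c] \in M) (daM : [set d; a] \in M)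
  (eab : e a b) (ecd : e c d)
  (nab : a != b) (nac : a != c) (nad : a != d) (nbc : b != c) (nbd : b != d) (ncd : c != d).

Lemma mb : mate M b = c. Proof. exact: mate_uniq. Qed.
Lemma mc : mate M c = b. Proof. by apply: mate_uniq => //; rewrite setUC. Qed.
Lemma md : mate M d = a. Proof. exact: mate_uniq. Qed.
Lemma ma : mate M a = d. Proof. by apply: mate_uniq => //; rewrite setUC. Qed.

Lemma abM : [set a; b] \notin M.
Proof. by apply: notin2 => //; rewrite ma eq_sym. Qed.
Lemma cdM : [set c; d] \notin M.
Proof. by apply: notin2 => //; rewrite mc. Qed.

Lemma sw_pm : pm (sw M a b c d).
Proof.
apply/andP; split.
  apply/forallP => D; apply/implyP; rewrite in_sw => /orP [/andP [_ DM]|/orP [/eqP ->|/eqP ->]].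
  - exact: pm_edge DM.
  - exact: is_edge2.
  - exact: is_edge2.
apply/forallP => v.
have sab : [set a; b] \in sw M a b c d by rewrite in_sw eqxx orbT.
have scd : [set c; d] \in sw M a b c d by rewrite in_sw eqxx !orbT.
have [->|va] := eqVneq v a.
  apply: (card1_of sab (set21 _ _)) => D; rewrite in_sw => /orP [/andP [/andP [h1 _] DM] aD|/orP [/eqP ->|/eqP -> /set2P [] /eqP]] //.
  - by move: h1; rewrite (pm_uniq pmM DM daM aD (set22 _ _)) eqxx.
  - by rewrite (negbTE nac).
  - by rewrite (negbTE nad).
have [->|vb] := eqVneq v b.
  apply: (card1_of sab (set22 _ _)) => D; rewrite in_sw => /orP [/andP [/andP [_ h1] DM] bD|/orP [/eqP ->|/eqP -> /set2P [] /eqP]] //.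
  - by move: h1; rewrite (pm_uniq pmM DM bcM bD (set21 _ _)) eqxx.
  - by rewrite (negbTE nbc).
  - by rewrite (negbTE nbd).
have [->|vc] := eqVneq v c.
  apply: (card1_of scd (set21 _ _)) => D; rewrite in_sw => /orP [/andP [/andP [_ h1] DM] bD|/orP [/eqP -> /set2P [] /eqP|/eqP ->]] //.
  - by move: h1; rewrite (pm_uniq pmM DM bcM bD (set22 _ _)) eqxx.
  - by rewrite eq_sym (negbTE nac).
  - by rewrite eq_sym (negbTE nbc).
have [->|vd] := eqVneq v d.
  apply: (card1_of scd (set22 _ _)) => D; rewrite in_sw => /orP [/andP [/andP [h1 _] DM] bD|/orP [/eqP -> /set2P [] /eqP|/eqP ->]] //.
  - by move: h1; rewrite (pm_uniq pmM DM daM bD (set21 _ _)) eqxx.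
  - by rewrite eq_sym (negbTE nad).
  - by rewrite eq_sym (negbTE nbd).
have vM := mate_in v pmM.
have svM : [set v; mate M v] \in sw M a b c d.
  by rewrite in_sw vM neq2 // neq2.
apply: (card1_of svM (set21 _ _)) => D; rewrite in_sw => /orP [/andP [_ DM] vD|/orP [/eqP -> /set2P [] /eqP|/eqP -> /set2P [] /eqP]].
- exact: pm_uniq DM vM vD (set21 _ _).
- by rewrite (negbTE va).
- by rewrite (negbTE vb).
- by rewrite (negbTE vc).
- by rewrite (negbTE vd).
Qed.


End Sw.

Lemma sw_inv M a b c d : pm M -> [set b; c] \in M -> [set d; a] \in M ->
  e a b -> e c d -> a != b -> a != c -> a != d -> b != c -> b != d -> c != d ->
  sw (sw M a b c d) b c d a = M.
Proof.
move=> pmM bcM daM eab ecd nab nac nad nbc nbd ncd.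
have pm1 : pm (sw M a b c d) by apply: sw_pm.
have sab : [set a; b] \in sw M a b c d by rewrite in_sw eqxx orbT.
have scd : [set c; d] \in sw M a b c d by rewrite in_sw eqxx !orbT.
have ebc := edge_in pmM bcM. have eda := edge_in pmM daM.
have pm2 : pm (sw (sw M a b c d) b c d a).
  apply: sw_pm => //; by rewrite eq_sym.
symmetry; apply: pm_sub_eq => //; apply/subsetP => D DM.
rewrite in_sw; have [->|h1] := eqVneq D [set b; c]; first by rewrite orbT.
have [->|h2] := eqVneq D [set d; a]; first by rewrite !orbT.
have h3 : D != [set a; b] by apply: contraNneq (abM pmM daM nbd) => <-.
have h4 : D != [set c; d] by apply: contraNneq (cdM pmM bcM nbd) => <-.
rewrite h3 h4 /= !orbF in_sw h1 h2 DM; done.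
Qed.


Lemma swC M a b c d : sw M c d a b = sw M a b c d.
Proof.
apply/setP => D; rewrite !in_sw.
by case: (D == [set d; a]); case: (D == [set b; c]); case: (D == [set a; b]);
  case: (D == [set c; d]); case: (D \in M).
Qed.

Lemma fsP M S : forcing_set e M S <->
  (S \subset M /\ forall N, pm N -> S \subset N -> N = M).
Proof.
rewrite /forcing_set; split.
  case/andP => -> /forallP H; split => // N pN sN.
  by apply/eqP; move: (H N); rewrite pN sN.
case=> -> H; apply/forallP => N; apply/implyP => /andP [pN sN].
by rewrite (H N pN sN).
Qed.

Lemma fs_self M : pm M -> forcing_set e M M.
Proof. move=> pmM; apply/fsP; split => // N pN sN; symmetry; exact: pm_sub_eq. Qed.

Lemma fn_le M S : forcing_set e M S -> forcing_number e M <= #|S|.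
Proof. move=> h; rewrite /forcing_number; exact: bigmin_leq. Qed.

Lemma fn_att M : pm M -> exists S, forcing_set e M S /\ #|S| = forcing_number e M.
Proof.
move=> pmM; rewrite /forcing_number.
apply: (big_ind (fun v => exists S, forcing_set e M S /\ #|S| = v)).
- by exists M; split => //; exact: fs_self.
- move=> x y [S1 [h1 <-]] [S2 [h2 <-]].
  case: (leqP #|S1| #|S2|) => h.
    by exists S1.
  by exists S2.
- by move=> S hS; exists S.
Qed.

Lemma sw_f M a b c d : pm M -> [set b; c] \in M -> [set d; a] \in M ->
  e a b -> e c d -> a != b -> a != c -> a != d -> b != c -> b != d -> c != d ->
  forcing_number e (sw M a b c d) <= (forcing_number e M).+1.
Proof.
move=> pmM bcM daM eab ecd nab nac nad nbc nbd ncd.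
have pm1 : pm (sw M a b c d) by apply: sw_pm.
have ebc := edge_in pmM bcM. have eda := edge_in pmM daM.
have abnM := abM pmM daM nbd. have cdnM := cdM pmM bcM nbd.
case: (fn_att pmM) => S [fS <-]; case/fsP: (fS) => SM Sf.
have hit : ([set b; c] \in S) || ([set d; a] \in S).
  apply/negPn/negP => /norP [h1 h2].
  have E : sw M a b c d = M.
    apply: Sf pm1 _; apply/subsetP => D DS; rewrite in_sw (subsetP SM _ DS) andbT.
    have n1 : D != [set b; c] by apply: contraNneq h1 => <-.
    have n2 : D != [set d; a] by apply: contraNneq h2 => <-.
    by rewrite n1 n2.
  by move: abnM; rewrite -E in_sw eqxx orbT.
set S' := sw S a b c d.
have cardS' : #|S'| <= #|S|.+1.
  rewrite /S' /sw cardsU (leq_trans (leq_subr _ _)) // cards2.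
  have hlt : #|S :\ [set b; c] :\ [set d; a]| < #|S|.
    case/orP: hit => h.
      apply: leq_ltn_trans (subset_leq_card (subD1set _ _)) _.
      by rewrite [X in _ < X](cardsD1 [set b; c]) h.
    rewrite setDDl setUC -setDDl.
    apply: leq_ltn_trans (subset_leq_card (subD1set _ _)) _.
    by rewrite [X in _ < X](cardsD1 [set d; a]) h.
  case: ([set a; b] != [set c; d]) => /=; rewrite addnS ltnS ?addn1 ?addn0 //.
  exact: ltnW.
apply: leq_trans (fn_le _) cardS'.
apply/fsP; split.
  apply/subsetP => D; rewrite !in_sw => /orP [/andP [h DS]|-> //]; last by rewrite orbT.
  by rewrite h (subsetP SM _ DS).
move=> N pN sN.
have abN : [set a; b] \in N by apply: (subsetP sN); rewrite in_sw eqxx orbT.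
have cdN : [set c; d] \in N by apply: (subsetP sN); rewrite in_sw eqxx !orbT.
have pN' : pm (sw N b c d a) by apply: sw_pm => //; rewrite eq_sym.
have E : sw N b c d a = M.
  apply: Sf pN' _; apply/subsetP => D DS; rewrite in_sw.
  have [->|h1] := eqVneq D [set b; c]; first by rewrite orbT.
  have [->|h2] := eqVneq D [set d; a]; first by rewrite !orbT.
  have h3 : D != [set a; b] by apply: contraNneq abnM => <-; exact: (subsetP SM).
  have h4 : D != [set c; d] by apply: contraNneq cdnM => <-; exact: (subsetP SM).
  rewrite h3 h4 /= !orbF; apply: (subsetP sN); by rewrite in_sw h1 h2 DS.
rewrite -(@sw_inv N b c d a) //; try by rewrite eq_sym.
by rewrite E swC.
Qed.


Lemma mem_of M u v : pm M -> mate M u = v -> [set u; v] \in M.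
Proof. by move=> pmM <-; exact: mate_in. Qed.
Lemma mem_of' M u v : pm M -> mate M u = v -> [set v; u] \in M.
Proof. by move=> pmM <-; rewrite setUC; exact: mate_in. Qed.
Lemma edge_of M u v : pm M -> mate M u = v -> e u v.
Proof. by move=> pmM <-; exact: mate_edge. Qed.
Lemma edge_of' M u v : pm M -> mate M u = v -> e v u.
Proof. by move=> pmM <-; rewrite e_sym; exact: mate_edge. Qed.
Lemma neq_of M u v : pm M -> mate M u = v -> u != v.
Proof. by move=> pmM <-; rewrite eq_sym mate_neq. Qed.

Lemma mn2 X u v a b : mate X u = a -> mate X v = b -> a != b -> u != v.
Proof. by move=> <- <-; apply: contra => /eqP ->. Qed.

Lemma card_pm M : pm M -> #|T| = #|M|.*2.
Proof.
move=> pmM.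
have part : partition M [set: T].
  apply/and3P; split.
  - apply/eqP/setP => v; rewrite inE; apply/bigcupP.
    by exists [set v; mate M v]; [exact: mate_in|exact: set21].
  - apply/trivIsetP => A B AM BM AB; apply/pred0P => v /=.
    apply/negbTE/negP => /andP [vA vB]; move/eqP: AB; apply.
    exact: pm_uniq AM BM vA vB.
  - apply/negP => h; case/is_edgeP: (pm_edge pmM h) => u [w [H _]].
    by have := set21 u w; rewrite -H inE.
rewrite -cardsT (card_partition part) -muln2 -sum_nat_const.
apply: eq_bigr => A AM; case/is_edgeP: (pm_edge pmM AM) => u [w [-> h]].
by rewrite cards2; case: eqP h => // ->; rewrite e_irr.
Qed.

Lemma tw_of Ms : pm Ms -> #|Ms| <= (forcing_number e Ms).+1 ->
  forall x y, y != x -> y != mate Ms x ->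
  (e x y && e (mate Ms x) (mate Ms y)) || (e x (mate Ms y) && e (mate Ms x) y).
Proof.
move=> pmMs hf x y yx ypx; apply/negPn/negP => ntw.
have ppx : mate Ms (mate Ms x) = x := mateK _ pmMs.
have ppy : mate Ms (mate Ms y) = y := mateK _ pmMs.
move: ppx ppy ypx ntw; set px := mate Ms x; set py := mate Ms y => ppx ppy ypx ntw.
have xpy : x != py by apply: (mn2 (erefl px) ppy); rewrite eq_sym.
have xpx := neq_of pmMs (erefl px). have ypy := neq_of pmMs (erefl py).
have xy : x != y by rewrite eq_sym.
have pxy : px != y by rewrite eq_sym.
have pxpy : px != py := mn2 ppx ppy xy.
set S := Ms :\ [set x; px] :\ [set y; py].
have fS : forcing_set e Ms S.
  apply/fsP; split; first exact: subset_trans (subD1set _ _) (subD1set _ _).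
  move=> N pN sN.
  have four z : z != x -> z != px -> z != y -> z != py -> mate N z = mate Ms z.
    move=> h1 h2 h3 h4; apply: mate_uniq pN _; apply: (subsetP sN).
    by rewrite !inE (mate_in z pmMs) (neq2 _ h3 h4) (neq2 _ h1 h2).
  have Kx := mateK x pN. have Ky := mateK y pN.
  have hx : mate N x = px.
    have [//|h] := eqVneq (mate N x) px; exfalso.
    move: Kx h; set q := mate N x => Kx h.
    have qx : q != x by rewrite /q mate_neq.
    have [qy|qy] := eqVneq q y.
      have Kpx := mateK px pN; move: Kpx; set r := mate N px => Kpx.
      have rx : r != x by apply: contraNneq h => rx; rewrite /q -rx Kpx.
      have ry : r != y by apply: contraNneq xpx => ry; rewrite -Kx qy -ry Kpx.
      have rpx : r != px by rewrite /r mate_neq.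
      have rpy : r = py.
        have [//|rpy] := eqVneq r py.
        have := four r rx rpx ry rpy; rewrite Kpx => E.
        by exfalso; move/eqP: rx; apply; rewrite -ppx E (mateK _ pmMs).
      move/negP: ntw; apply; apply/orP; left.
      by rewrite (edge_of pN qy) (edge_of pN rpy).
    have [qpy|qpy] := eqVneq q py.
      have Kpx := mateK px pN; move: Kpx; set r := mate N px => Kpx.
      have rx : r != x by apply: contraNneq h => rx; rewrite /q -rx Kpx.
      have rpy : r != py by apply: contraNneq xpx => ry; rewrite -Kx qpy -ry Kpx.
      have rpx : r != px by rewrite /r mate_neq.
      have ry : r = y.
        have [//|ry] := eqVneq r y.
        have := four r rx rpx ry rpy; rewrite Kpx => E.
        by exfalso; move/eqP: rx; apply; rewrite -ppx E (mateK _ pmMs).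
      move/negP: ntw; apply; apply/orP; right.
      by rewrite (edge_of pN qpy) (edge_of pN ry).
    have := four q qx h qy qpy; rewrite Kx => E.
    by move/eqP: h; apply; rewrite /px E (mateK _ pmMs).
  have Kpx : mate N px = x by rewrite -hx Kx.
  have hy : mate N y = py.
    have [//|h] := eqVneq (mate N y) py; exfalso.
    move: Ky h; set s := mate N y => Ky h.
    have sy : s != y by rewrite /s mate_neq.
    have sx : s != x by apply: contraNneq pxy => sx; rewrite -hx -sx Ky.
    have spx : s != px by apply: contraNneq yx => spx; rewrite -Ky spx Kpx.
    have := four s sx spx sy h; rewrite Ky => E.
    by move/eqP: h; apply; rewrite /py E (mateK _ pmMs).
  symmetry; apply: pm_sub_eq => //; apply/subsetP => D DMs.
  have [->|h1] := eqVneq D [set x; px]; first exact: mem_of.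
  have [->|h2] := eqVneq D [set y; py]; first exact: mem_of.
  by apply: (subsetP sN); rewrite !inE h1 h2 DMs.
have cS : #|Ms| = #|S|.+2.
  rewrite (cardsD1 [set x; px]) (mem_of pmMs (erefl px)).
  rewrite (cardsD1 [set y; py] (Ms :\ _)) !inE (mem_of pmMs (erefl py)) (neq2 _ yx ypx).
  by [].
have := fn_le fS; rewrite -ltnS => h; have := leq_trans hf h; by rewrite cS ltnn.
Qed.

Section Tree.
Variables (Ms : {set {set T}}).
Hypothesis pmMs : pm Ms.

Definition gs M N : Prop := M = N \/ exists a b c d,
  [/\ pm M, [set b; c] \in M, [set d; a] \in M, e a b & e c d] /\
  [/\ a != b, a != c & a != d] /\ [/\ b != c, b != d & c != d] /\
  ([set b; c] \notin Ms) /\ ([set d; a] \notin Ms) /\ N = sw M a b c d.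

Lemma mk_gs M a b c d : pm M -> [set b; c] \in M -> [set d; a] \in M -> e a b -> e c d ->
  a != b -> a != c -> a != d -> b != c -> b != d -> c != d ->
  [set b; c] \notin Ms -> [set d; a] \notin Ms -> gs M (sw M a b c d).
Proof. by move=> *; right; exists a, b, c, d. Qed.

Lemma gs_pm M N : gs M N -> pm M -> pm N.
Proof.
case=> [<- //|[a [b [c [d [[h1 h2 h3 h4 h5] [[n1 n2 n3] [[n4 n5 n6] [_ [_ ->]]]]]]]]]] _.
exact: sw_pm.
Qed.

Lemma gs_f M N : gs M N -> forcing_number e N <= (forcing_number e M).+1.
Proof.
case=> [<- //|[a [b [c [d [[h1 h2 h3 h4 h5] [[n1 n2 n3] [[n4 n5 n6] [_ [_ ->]]]]]]]]]].
exact: sw_f.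
Qed.

Lemma gs_mono M N D : gs M N -> D \in Ms -> D \in M -> D \in N.
Proof.
case=> [<- //|[a [b [c [d [_ [_ [_ [h1 [h2 ->]]]]]]]]]] DMs DM.
rewrite in_sw DM.
have -> : D != [set d; a] by apply: contraNneq h2 => <-.
by have -> : D != [set b; c] by apply: contraNneq h1 => <-.
Qed.


Hypothesis tw : forall x y, y != x -> y != mate Ms x ->
  (e x y && e (mate Ms x) (mate Ms y)) || (e x (mate Ms y) && e (mate Ms x) y).

Lemma tree M c0 c1 c2 c3 c4 c5 c6 cm1 cm2 : pm M ->
  mate M c1 = c0 -> mate M c0 = c1 -> mate Ms c1 = c2 -> mate Ms c2 = c1 ->
  mate M c2 = c3 -> mate M c3 = c2 -> mate Ms c3 = c4 -> mate Ms c4 = c3 ->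
  mate M c4 = c5 -> mate M c5 = c4 -> mate Ms c5 = c6 -> mate Ms c6 = c5 ->
  mate Ms c0 = cm1 -> mate Ms cm1 = c0 -> mate M cm1 = cm2 -> mate M cm2 = cm1 ->
  c0 != c2 ->
  exists N1 N2, gs M N1 /\ gs N1 N2 /\ exists D, [/\ D \in Ms, D \in N2 & D \notin M].
Proof.
move=> pmM m1 m0 p1 p2 m2 m3 p3 p4 m4 m5 p5 p6 p0 pm1 mm1 mm2 d02.
have d10 := neq_of pmM m1. have d01 : c0 != c1 by rewrite eq_sym.
have d12 := neq_of pmMs p1. have d21 : c2 != c1 by rewrite eq_sym.
have d23 := neq_of pmM m2. have d32 : c3 != c2 by rewrite eq_sym.
have d34 := neq_of pmMs p3. have d43 : c4 != c3 by rewrite eq_sym.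
have d45 := neq_of pmM m4. have d54 : c5 != c4 by rewrite eq_sym.
have d0m1 := neq_of pmMs p0. have dm10 : cm1 != c0 by rewrite eq_sym.
have dm1m2 := neq_of pmM mm1. have dm2m1 : cm2 != cm1 by rewrite eq_sym.
have d20 : c2 != c0 by rewrite eq_sym.
have d13 := mn2 m1 m3 d02. have d31 : c3 != c1 by rewrite eq_sym.
have d03 := mn2 m0 m3 d12. have d30 : c3 != c0 by rewrite eq_sym.
have dm11 := mn2 pm1 p1 d02. have d1m1 : c1 != cm1 by rewrite eq_sym.
have dm12 := mn2 pm1 p2 d01. have d2m1 : c2 != cm1 by rewrite eq_sym.
have e01 := edge_of' pmM m1. have e12 := edge_of pmMs p1.
have e23 := edge_of pmM m2. have e34 := edge_of pmMs p3.
have e45 := edge_of pmM m4. have em10 := edge_of' pmMs p0.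
have em1m2 := edge_of pmM mm1.
case E03: (e c0 c3).
  exists (sw M c1 c2 c3 c0), (sw M c1 c2 c3 c0); split.
    apply: mk_gs => //; try exact: mem_of; try exact: mem_of'; first by rewrite e_sym.
      by apply: notin2 pmMs _; rewrite p2.
    by apply: notin2 pmMs _; rewrite p0.
  split; first by left.
  exists [set c1; c2]; split; first exact: mem_of.
    by rewrite in_sw eqxx orbT.
  by apply: notin2 pmM _; rewrite m1.
move/negbT: E03 => n03.
have dc3m1 : c3 != cm1 by apply: contraNneq n03 => ->; rewrite e_sym.
have dm13 : cm1 != c3 by rewrite eq_sym.
have := tw d30 (_ : c3 != mate Ms c0); rewrite p0 p3 (negbTE n03) /= => /(_ dc3m1) /andP [e04 em13].
have d25 := mn2 m2 m5 d34.
have d52 : c5 != c2 by rewrite eq_sym.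
have d24 := mn2 p2 p4 d13. have d42 : c4 != c2 by rewrite eq_sym.
have d35 := mn2 m3 m5 d24. have d53 : c5 != c3 by rewrite eq_sym.
case E25: (e c2 c5).
  exists (sw M c3 c4 c5 c2), (sw M c3 c4 c5 c2); split.
    apply: mk_gs => //; try exact: mem_of; try exact: mem_of'; first by rewrite e_sym.
      by apply: notin2 pmMs _; rewrite p4.
    by apply: notin2 pmMs _; rewrite p2.
  split; first by left.
  exists [set c3; c4]; split; first exact: mem_of.
    by rewrite in_sw eqxx orbT.
  by apply: notin2 pmM _; rewrite m3.
move/negbT: E25 => n25.
have d51 : c5 != c1 by apply: contraNneq n25 => ->; rewrite e_sym.
have := tw d52 (_ : c5 != mate Ms c2); rewrite p2 p5 (negbTE n25) /= => /(_ d51) /andP [e26 e15].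
have d04 := mn2 p0 p4 dm13. have d40 : c4 != c0 by rewrite eq_sym.
have d14 := mn2 p1 p4 d23. have d41 : c4 != c1 by rewrite eq_sym.
have d05 := mn2 m0 m5 d14. have d50 : c5 != c0 by rewrite eq_sym.
have d15 : c1 != c5 by rewrite eq_sym.
set N1 := sw M c0 c4 c5 c1.
have pN1 : pm N1 by rewrite /N1; apply: (sw_pm pmM (mem_of pmM m4) (mem_of pmM m1) e04 _ d05 d01 d45 d41); rewrite e_sym.
have g1 : gs M N1.
  apply: mk_gs => //; try exact: mem_of; try exact: mem_of'; first by rewrite e_sym.
    by apply: notin2 pmMs _; rewrite p4.
  by apply: notin2 pmMs _; rewrite p1.
have c04N1 : [set c0; c4] \in N1 by rewrite in_sw eqxx orbT.
case E02: (e c0 c2).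
  have c23N1 : [set c2; c3] \in N1.
    by rewrite in_sw (mem_of pmM m2) (neq2 _ d21 d20) (neq2 _ d24 d25).
  exists N1, (sw N1 c3 c4 c0 c2); split => //; split.
    apply: mk_gs => //; first by rewrite setUC.
    - by apply: notin2 pmMs _; rewrite p4.
    - by apply: notin2 pmMs _; rewrite p2.
  exists [set c3; c4]; split; first exact: mem_of.
    by rewrite in_sw eqxx orbT.
  by apply: notin2 pmM _; rewrite m3.
move/negbT: E02 => n02.
have := tw d20 (_ : c2 != mate Ms c0); rewrite p0 p2 (negbTE n02) /= => /(_ d2m1) /andP [_ em12].
have dm24 : cm2 != c4.
  apply: contraNneq n02 => h.
  have h1 : cm1 = c5 by rewrite -mm2 h m4.
  have h2 : c0 = c6 by rewrite -pm1 h1 p5.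
  by rewrite h2 e_sym.
have d4m2 : c4 != cm2 by rewrite eq_sym.
have dm21 := mn2 mm2 m1 dm10. have d1m2 : c1 != cm2 by rewrite eq_sym.
have dm20 := mn2 mm2 m0 dm11. have d0m2 : c0 != cm2 by rewrite eq_sym.
have dm14 := mn2 pm1 p4 d03. have d4m1 : c4 != cm1 by rewrite eq_sym.
have dm25 := mn2 mm2 m5 dm14.
case E4: (e cm2 c4).
  have cmN1 : [set cm2; cm1] \in N1.
    by rewrite in_sw (mem_of' pmM mm1) (neq2 _ dm21 dm20) (neq2 _ dm24 dm25).
  exists N1, (sw N1 cm1 c0 c4 cm2); split => //; split.
    apply: mk_gs => //; first by rewrite e_sym.
    - by apply: notin2 pmMs _; rewrite p0.
    - by rewrite setUC; apply: notin2 pmMs _; rewrite pm1.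
  exists [set cm1; c0]; split; first exact: mem_of.
    by rewrite in_sw eqxx orbT.
  by apply: notin2 pmM _; rewrite mm1.
move/negbT: E4 => n4.
have dm23 := mn2 mm2 m3 dm12. have d3m2 : c3 != cm2 by rewrite eq_sym.
have n4' : ~~ e c4 cm2 by rewrite e_sym.
have := tw dm24 (_ : cm2 != mate Ms c4); rewrite p4 (negbTE n4') /= => /(_ dm23) /andP [_ e3m2].
have d2m2 := mn2 m2 mm2 dc3m1.
set N1' := sw M cm1 c2 c3 cm2.
have pN1' : pm N1'.
  by rewrite /N1'; apply: (sw_pm pmM (mem_of pmM m2) (mem_of' pmM mm1) em12 e3m2 dm13 dm1m2 d23 d2m2).
have g1' : gs M N1'.
  apply: mk_gs => //; try exact: mem_of; try exact: mem_of'.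
    by apply: notin2 pmMs _; rewrite p2.
  by rewrite setUC; apply: notin2 pmMs _; rewrite pm1.
have c01 : [set c0; c1] \in N1'.
  by rewrite in_sw (mem_of' pmM m1) (neq2 _ d0m2 d0m1) (neq2 _ d02 d03).
have c2m1 : [set c2; cm1] \in N1' by rewrite setUC in_sw eqxx orbT.
exists N1', (sw N1' cm1 c0 c1 c2); split => //; split.
  apply: mk_gs => //.
  - by apply: notin2 pmMs _; rewrite p0.
  - by apply: notin2 pmMs _; rewrite p2.
exists [set c1; c2]; split; first exact: mem_of.
  by rewrite in_sw eqxx !orbT.
by apply: notin2 pmM _; rewrite m1.
Qed.

Lemma step M : pm M -> ~~ (Ms \subset M) ->
  exists N1 N2, gs M N1 /\ gs N1 N2 /\ #|Ms :\: N2| < #|Ms :\: M|.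
Proof.
move=> pmM /subsetPn [D0 D0Ms D0M].
case/is_edgeP: (pm_edge pmMs D0Ms) => x [w [HD _]]; subst D0.
have hw := mate_uniq pmMs D0Ms; subst w.
have d02 : mate M x != mate Ms x.
  by apply: contraNneq D0M => <-; exact: mate_in.
have [N1 [N2 [g1 [g2 [D [DMs DN2 DM]]]]]] := tree pmM (erefl _) (mateK _ pmM)
  (erefl _) (mateK _ pmMs) (erefl _) (mateK _ pmM) (erefl _) (mateK _ pmMs)
  (erefl _) (mateK _ pmM) (erefl _) (mateK _ pmMs) (erefl _) (mateK _ pmMs)
  (erefl _) (mateK _ pmM) d02.
exists N1, N2; split => //; split => //.
apply: proper_card; apply/properP; split.
  apply/subsetP => D'; rewrite !inE => /andP [h1 h2]; rewrite h2 andbT.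
  by apply: contra h1 => h; apply: (gs_mono g2 h2); apply: (gs_mono g1 h2).
by exists D; rewrite !inE ?DN2 ?DMs ?DM.
Qed.

Lemma ivt k : k <= forcing_number e Ms -> forall M, pm M -> forcing_number e M <= k ->
  exists N, pm N /\ forcing_number e N = k.
Proof.
move=> hk M; move: {2}(#|Ms :\: M|) (leqnn #|Ms :\: M|) => n.
elim: n M => [|n IH] M hn pmM hM.
  case: (boolP (Ms \subset M)) => [sub|nsub].
    have E := pm_sub_eq pmMs pmM sub; subst M.
    by exists Ms; split => //; apply/eqP; rewrite eqn_leq hM hk.
  by have [N1 [N2 [_ [_ h]]]] := step pmM nsub; move: h; rewrite ltnNge (leq_trans hn).
case: (boolP (Ms \subset M)) => [sub|nsub].
  have E := pm_sub_eq pmMs pmM sub; subst M.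
  by exists Ms; split => //; apply/eqP; rewrite eqn_leq hM hk.
have [N1 [N2 [g1 [g2 hlt]]]] := step pmM nsub.
have [fMk|fM] := eqVneq (forcing_number e M) k; first by exists M.
have pN1 := gs_pm g1 pmM. have pN2 := gs_pm g2 pN1.
have h1 : forcing_number e N1 <= k.
  apply: leq_trans (gs_f g1) _; by rewrite ltn_neqAle fM hM.
have [fNk|fN1] := eqVneq (forcing_number e N1) k; first by exists N1.
have h2 : forcing_number e N2 <= k.
  apply: leq_trans (gs_f g2) _; by rewrite ltn_neqAle fN1 h1.
apply: (IH N2) => //; by rewrite -ltnS (leq_trans hlt).
Qed.

End Tree.
End S.

Theorem theorem5p9 (n : nat) (T : finType) (e : rel T)
  (e_sym : symmetric e) (e_irr : irreflexive e)
  (n_pos : 1 <= n) (hcard : #|T| = n.*2)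
  (has_pm : exists M, perfect_matching e M)
  (hF : max_forcing_number e = n - 1) :
  forall k : nat,
    in_forcing_spectrum e k <-> min_forcing_number e <= k <= n - 1.
Proof.
move=> k; split.
  case=> M [pM <-]; apply/andP; split.
    by rewrite /min_forcing_number; exact: bigmin_leq.
  by rewrite -hF /max_forcing_number; apply: leq_bigmax_cond.
case/andP => hmin hk.
have [M0 [pM0 fM0]] : exists M0, perfect_matching e M0 /\ forcing_number e M0 = min_forcing_number e.
  have : min_forcing_number e = #|T| \/ exists M0, perfect_matching e M0 /\ forcing_number e M0 = min_forcing_number e.
    rewrite /min_forcing_number.
    apply: (big_ind (fun v => v = #|T| \/ exists M0, perfect_matching e M0 /\ forcing_number e M0 = v)).
    - by left.
    - move=> x y hx hy; case: (leqP x y) => h; [exact: hx|exact: hy].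
    - by move=> M pM; right; exists M.
  case=> // h; exfalso.
  move: (leq_trans hmin hk); rewrite h hcard -addnn.
  case: n n_pos {hF hk hcard} => // m _; rewrite subn1 /= addSn ltnNge; by rewrite leq_addr.
have : max_forcing_number e = 0 \/ exists Ms, perfect_matching e Ms /\ forcing_number e Ms = max_forcing_number e.
  rewrite /max_forcing_number.
  apply: (big_ind (fun v => v = 0 \/ exists Ms, perfect_matching e Ms /\ forcing_number e Ms = v)).
  - by left.
  - move=> x y hx hy; case: (leqP x y) => h; [exact: hy|exact: hx].
  - by move=> M pM; right; exists M.
case=> [h0|[Ms [pMs fMs]]].
  exists M0; split => //; apply/eqP; rewrite eqn_leq fM0 hmin /=.
  by apply: (leq_trans hk); rewrite -hF h0.
rewrite hF in fMs.
have cMs : #|Ms| = n.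
  have h := card_pm e_irr pMs.
  by apply/eqP; rewrite -(eqn_pmul2l (isT : 0 < 2)) !mul2n -h hcard.
have hle : #|Ms| <= (forcing_number e Ms).+1 by rewrite cMs fMs subn1 prednK.
have tw := tw_of e_sym e_irr pMs hle.
have hkMs : k <= forcing_number e Ms by rewrite fMs.
have hM0 : forcing_number e M0 <= k by rewrite fM0.
exact: (ivt e_sym e_irr pMs tw hkMs pM0 hM0).
Qed.
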